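(* Let $m\ge 2$, $\sigma_0\in\{-1,+1\}$, $\tau>0$, real numbers $\alpha_0,\alpha_1,\dots,\alpha_{m-1}$ with $\alpha_0\ge 0$, and a real $(m-1)\times(m-1)$ signed permutation matrix $P$ be given. Consider the system $$D\,\partial_t q + \hat A\,\partial_x q = \hat B q,\qquad \hat A=\begin{bmatrix} (\alpha_1,\dots,\alpha_{m-1}) & \sigma_0\\ P & 0_{(m-1)\times 1}\end{bmatrix},\quad \hat B=\begin{bmatrix} -\alpha_0 & 0_{1\times(m-1)}\\ 0_{(m-1)\times 1} & P\end{bmatrix},$$ $D=\operatorname{diag}(1,\tau,\dots,\tau)$, i.e. $\partial_t q_0+\sum_{j=1}^{m-1}\alpha_j\partial_x q_{j-1}+\sigma_0\partial_x q_{m-1}=-\alpha_0 q_0$ and $\tau\partial_t q_i+\sum_{j}p_{ij}\partial_x q_{j-1}=\sum_j p_{ij}q_j$ for $i=1,\dots,m-1$. Then: (i) (stability at $k=0$) every $\omega\in\mathbb{C}$ with $\det(-i\omega D-\hat B)=0$ satisfies $\operatorname{Im}\omega\le 0$ if and only if $P=R-E$ with $R$ real skew-symmetric and $E$ diagonal with diagonal entries in $\{0,1\}$; (ii) (stability as $|k|\to\infty$) if $P=P^*$, then all eigenvalues of $\hat A$ are real, for every choice of real $\alpha_1,\dots,\alpha_{m-1}$.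
   Context: A real signed permutation matrix is a square matrix with all entries in $\{-1,0,+1\}$ having exactly one nonzero entry in each row and in each column. The matrix $P^*=(p^*_{ij})_{i,j=1}^{m-1}$ is defined by $p^*_{ij}=0$ if $i+j\ne m$, $p^*_{ij}=\sigma_0(-1)^{j-1}$ if $i+j=m$ and $j\le m/2$, and $p^*_{ij}=\sigma_0(-1)^{m-j}$ if $i+j=m$ and $j>m/2$. The system is a first-order relaxation of $u_t+\sum_{j=0}^{m-1}\alpha_j\partial_x^j u+\sigma_0\partial_x^m u=0$ with $q_j\approx\partial_x^j u$. The dispersion relation of the system is $\det(-i\omega D+ik\hat A-\hat B)=0$ (ansatz $q=\hat q e^{i(kx-\omega t)}$); stability at a wavenumber means all its roots $\omega$ satisfy $\operatorname{Im}\omega\le0$, and in the limit $|k|\to\infty$ this reduces to the requirement that $\hat A$ have only real eigenvalues. *)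

(* Defs.v *)
From HB Require Import structures.
From mathcomp Require Import all_boot all_order all_algebra.
From mathcomp Require Import complex.
From mathcomp Require Import reals.
Set Implicit Arguments. Unset Strict Implicit. Unset Printing Implicit Defensive.
Import Order.TTheory GRing.Theory Num.Theory.
Local Open Scope ring_scope.

Definition signed_perm_mx (R : nzRingType) (n : nat) (A : 'M[R]_n) : bool :=
  [forall i, forall j, A i j \in [:: -1; 0; 1]] &&
  [forall i, #|[set j | A i j != 0]| == 1%N] &&
  [forall j, #|[set i | A i j != 0]| == 1%N].

(* Throughout, n = m - 1 (so m = n + 1).  Indices of P run over 'I_n,
   with the 0-based index i standing for the paper's index i+1. *)

Definition Pstar (R : nzRingType) (n : nat) (s0 : R) : 'M[R]_n :=
  \matrix_(i < n, j < n)
    if (i.+1 + j.+1 == n.+1)%N then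
      (if (2 * j.+1 <= n.+1)%N then s0 * (-1) ^+ (j.+1).-1
       else s0 * (-1) ^+ (n.+1 - j.+1))
    else 0.

Definition Ahat (R : nzRingType) (n : nat) (alpha : 'rV[R]_n) (s0 : R)
  (P : 'M[R]_n) : 'M[R]_(1 + n) :=
  castmx (erefl (1 + n)%N, addnC n 1)
    (block_mx alpha (s0%:M : 'M[R]_1) P (0 : 'M[R]_(n, 1))).

Definition Bhat (R : nzRingType) (n : nat) (alpha0 : R) (P : 'M[R]_n)
  : 'M[R]_(1 + n) :=
  block_mx ((- alpha0)%:M : 'M[R]_1) 0 0 P.

Definition Dmx (R : nzRingType) (n : nat) (tau : R) : 'M[R]_(1 + n) :=
  block_mx (1%:M : 'M[R]_1) 0 0 (tau%:M : 'M[R]_n).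

Definition cmx (R : rcfType) (p q : nat) (A : 'M[R]_(p, q)) : 'M[R[i]]_(p, q) :=
  map_mx (fun x : R => (x%:C)%C) A.

(* Main.v *)
Require Import Defs.
From HB Require Import structures.
From mathcomp Require Import all_boot all_order all_algebra.
From mathcomp Require Import complex.
From mathcomp Require Import reals.
From mathcomp Require Import ring lra zify.
Import Order.TTheory GRing.Theory Num.Theory.
Set Implicit Arguments. Unset Strict Implicit.
Local Open Scope ring_scope.


Lemma sp_entry (R : realType) n (P : 'M[R]_n) i j :
  signed_perm_mx P -> P i j \in [:: -1; 0; 1].
Proof. by case/andP=> /andP[/forallP/(_ i)/forallP/(_ j) ? _] _. Qed.

Lemma sp_row (R : realType) n (P : 'M[R]_n) i j k :
  signed_perm_mx P -> P i j != 0 -> P i k != 0 -> j = k.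
Proof.
case/andP=> /andP[_ /forallP/(_ i)/cards1P[x Hx]] _ Hj Hk.
have: j \in [set j | P i j != 0] by rewrite inE.
have: k \in [set j | P i j != 0] by rewrite inE.
by rewrite Hx !inE => /eqP-> /eqP->.
Qed.

Lemma sp_col (R : realType) n (P : 'M[R]_n) i j k :
  signed_perm_mx P -> P i j != 0 -> P k j != 0 -> i = k.
Proof.
case/andP=> _ /forallP/(_ j)/cards1P[x Hx] Hj Hk.
have: i \in [set i | P i j != 0] by rewrite inE.
have: k \in [set i | P i j != 0] by rewrite inE.
by rewrite Hx !inE => /eqP-> /eqP->.
Qed.

Lemma sp_colex (R : realType) n (P : 'M[R]_n) j :
  signed_perm_mx P -> exists i, P i j != 0.
Proof.
case/andP=> _ /forallP/(_ j)/cards1P[x Hx]; exists x.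
have: x \in [set i | P i j != 0] by rewrite Hx inE.
by rewrite inE.
Qed.

Lemma sp_sq (R : realType) n (P : 'M[R]_n) i j :
  signed_perm_mx P -> P i j != 0 -> P i j ^+ 2 = 1.
Proof.
move=> /(sp_entry i j); rewrite !inE => /or3P[]/eqP-> //; rewrite ?eqxx //.
by rewrite sqrrN expr1n.
by rewrite expr1n.
Qed.

Lemma sp_orth (R : realType) n (P : 'M[R]_n) :
  signed_perm_mx P -> P^T *m P = 1%:M.
Proof.
move=> hP; apply/matrixP=> j k; rewrite !mxE.
have [i Hi] := sp_colex j hP.
rewrite (bigD1 i) //= big1 => [|l Hl]; rewrite !mxE.
  case: eqP => [<-|Hjk]; first by rewrite -expr2 (sp_sq hP Hi) addr0.
  have [Hz|Hnz] := eqVneq (P i k) 0; first by rewrite Hz mulr0 addr0.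
  by case: Hjk; apply: (sp_row hP Hi Hnz).
have [Hz|Hnz] := eqVneq (P l j) 0; first by rewrite Hz mul0r.
by move: Hl; rewrite (sp_col hP Hi Hnz) eqxx.
Qed.


Lemma det_sys (R : realType) n (tau alpha0 : R) (P : 'M[R]_n) (w : R[i]) :
  \det (- ('i%C * w) *: cmx (Dmx n tau) - cmx (Bhat alpha0 P)) =
  (- ('i%C * w) + (alpha0%:C)%C) * \det ((- ('i%C * w) * (tau%:C)%C)%:M - cmx P).
Proof.
rewrite /cmx /Dmx /Bhat !map_block_mx scale_block_mx opp_block_mx add_block_mx.
rewrite !map_mx0 scaler0 ?subr0 ?oppr0 ?addr0.
rewrite scaler0 det_ublock !map_scalar_mx /= !scale_scalar_mx -raddfB /= det_scalar1.
by rewrite rmorphN opprK rmorph1 mulr1.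
Qed.


Lemma reterm (R : realType) (z1 z2 : R[i]) (x : R) :
  complex.Re (z1 * (x%:C)%C * (z2^*)%C) = x * (complex.Re z1 * complex.Re z2 + complex.Im z1 * complex.Im z2).
Proof. case: z1 z2 => a b [c d] /=. ring. Qed.

Lemma reterm2 (R : realType) (z : R[i]) (x : R) :
  complex.Re (x%:C%C * z) = x * complex.Re z.
Proof. case: z => a b /=. ring. Qed.

Lemma reterm3 (R : realType) (a z : R[i]) :
  complex.Re (a * z * z^*%C) = complex.Re a * (complex.Re z ^+ 2 + complex.Im z ^+ 2).
Proof. case: a z => a b [c d] /=. ring. Qed.

Lemma norm_pos (R : realType) n (v : 'rV[R[i]]_n) : v != 0 ->
  0 < \sum_k (complex.Re (v 0 k) ^+ 2 + complex.Im (v 0 k) ^+ 2).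
Proof.
move=> vn0.
have [k Hk] : exists k, v 0 k != 0.
  apply/existsP; apply: contraR vn0; rewrite negb_exists => /forallP H.
  apply/eqP/rowP => k; rewrite mxE; exact/eqP/negPn/H.
rewrite (bigD1 k) //=; apply: ltr_pwDl; last first.
  by apply: sumr_ge0 => j _; rewrite addr_ge0 // sqr_ge0.
move: Hk; case: (v 0 k) => a b; rewrite eq_complex /= negb_and => /orP[] H.
  have := sqr_ge0 b; have : 0 < a ^+ 2 by rewrite lt_def sqr_ge0 sqrf_eq0 H.
  lra.
have := sqr_ge0 a; have : 0 < b ^+ 2 by rewrite lt_def sqr_ge0 sqrf_eq0 H.
lra.
Qed.

Lemma eig_re_le0 (R : realType) n (S E : 'M[R]_n) (v : 'rV[R[i]]_n) (mu : R[i]) :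
  S^T = -S -> is_diag_mx E -> (forall k, E k k \in [:: 0; 1]) -> v != 0 ->
  v *m cmx (S - E) = mu *: v -> complex.Re mu <= 0.
Proof.
move=> HS HE HE01 vn0 Hv.
pose f r c := complex.Re (v 0 r) * complex.Re (v 0 c) + complex.Im (v 0 r) * complex.Im (v 0 c).
have key : complex.Re (\sum_c (v *m cmx (S - E)) 0 c * (v 0 c)^*%C) =
   \sum_c \sum_r (S r c * f r c) - \sum_c \sum_r (E r c * f r c).
  rewrite raddf_sum -sumrB; apply: eq_bigr => c _.
  rewrite !mxE big_distrl raddf_sum -sumrB; apply: eq_bigr => r _.
  by rewrite !mxE -mulrBl; apply: reterm.
have XS : \sum_c \sum_r (S r c * f r c) = 0.
  have H : \sum_c \sum_r (S r c * f r c) = - \sum_c \sum_r (S r c * f r c).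
    rewrite {1}exchange_big /= -sumrN; apply: eq_bigr => c _; rewrite -sumrN.
    apply: eq_bigr => r _.
    have E1 : S c r = - S r c.
      by have := congr1 (fun M : 'M[R]_n => M r c) HS; rewrite !mxE.
    rewrite E1 /f; ring.
  lra.
have XE : 0 <= \sum_c \sum_r (E r c * f r c).
  apply: sumr_ge0 => c _; rewrite (bigD1 c) //= big1 ?addr0.
    have := HE01 c; rewrite !inE => /orP[]/eqP->; first by rewrite mul0r.
    by rewrite mul1r /f addr_ge0 // -expr2 sqr_ge0.
  by move=> r Hr; move/is_diag_mxP: HE => /(_ r c Hr) ->; rewrite mul0r.
have rhs : complex.Re (\sum_c (v *m cmx (S - E)) 0 c * (v 0 c)^*%C) =
   complex.Re mu * \sum_k (complex.Re (v 0 k) ^+ 2 + complex.Im (v 0 k) ^+ 2).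
  rewrite Hv raddf_sum mulr_sumr; apply: eq_bigr => c _.
  by rewrite !mxE; apply: reterm3.
have Np := norm_pos vn0.
move: key; rewrite rhs XS sub0r => key.
have : complex.Re mu * \sum_k (complex.Re (v 0 k) ^+ 2 + complex.Im (v 0 k) ^+ 2) <= 0 by lra.
by rewrite pmulr_lle0.
Qed.


Lemma det_eigen (R : realType) n (A : 'M[R[i]]_n) (mu : R[i]) :
  \det (mu%:M - A) = 0 -> exists2 v : 'rV_n, v != 0 & v *m A = mu *: v.
Proof.
move/eqP/det0P=> [v vn0 Hv]; exists v => //.
by move: Hv; rewrite mulmxBr mul_mx_scalar => /eqP; rewrite subr_eq0 => /eqP<-.
Qed.

Lemma eigen_det (R : realType) n (A : 'M[R[i]]_n) (mu : R[i]) (v : 'rV_n) :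
  v != 0 -> v *m A = mu *: v -> \det (mu%:M - A) = 0.
Proof.
move=> vn0 Hv; apply/eqP/det0P; exists v => //.
by rewrite mulmxBr mul_mx_scalar Hv subrr.
Qed.

Lemma dir1 (R : realType) n (tau alpha0 : R) (P S E : 'M[R]_n) (w : R[i]) :
  0 < tau -> 0 <= alpha0 ->
  S^T = -S -> is_diag_mx E -> (forall k, E k k \in [:: 0; 1]) -> P = S - E ->
  \det (- ('i%C * w) *: cmx (Dmx n tau) - cmx (Bhat alpha0 P)) = 0 ->
  complex.Im w <= 0.
Proof.
move=> htau ha0 HS HE HE01 HP; rewrite det_sys => /eqP; rewrite mulf_eq0 => /orP[]/eqP H.
  have := congr1 (@complex.Re R) H; case: w {H} => a b /=. lra.
have [v vn0 Hv] := det_eigen H.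
rewrite HP in Hv; have := eig_re_le0 HS HE HE01 vn0 Hv.
case: w {H Hv} => a b /=.
rewrite ?mul0r ?mul1r ?sub0r ?add0r ?subr0 ?opprK ?mulr0 ?subr0.
by rewrite pmulr_lle0.
Qed.


Lemma hyp_eig (R : realType) n (tau alpha0 : R) (P : 'M[R]_n) :
  0 < tau ->
  (forall w : R[i],
       \det (- ('i%C * w) *: cmx (Dmx n tau) - cmx (Bhat alpha0 P)) = 0 ->
       complex.Im w <= 0) ->
  forall (d : R[i]) (v : 'rV_n), v != 0 -> v *m cmx P = d *: v -> complex.Re d <= 0.
Proof.
move=> htau H d v vn0 Hv.
have tau0 : tau != 0 by rewrite gt_eqF.
pose w := 'i%C * d * (tau^-1)%:C%C.
have Hmu : - ('i%C * w) * (tau%:C)%C = d.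
  rewrite /w; clear w; case: d {Hv} => a b; apply/eqP; rewrite eq_complex /=.
  apply/andP; split; apply/eqP; field; exact: tau0.
have := H w; rewrite det_sys Hmu (eigen_det vn0 Hv) mulr0 => /(_ erefl).
clear Hmu; rewrite /w; clear w; case: d {Hv} => a b /=.
rewrite ?mul0r ?mul1r ?sub0r ?add0r ?subr0 ?opprK ?mulr0 ?subr0 ?addr0.
have ti : 0 < tau^-1 by rewrite invr_gt0.
move: ti; set t := tau^-1 => ti h. nra.
Qed.

Local Open Scope sesquilinear_scope.

Lemma cmx_tr (R : realType) m p (M : 'M[R]_(m, p)) : (cmx M)^t* = cmx M^T.
Proof. by apply/matrixP=> i j; rewrite !mxE; apply: conjc_real. Qed.

Lemma cmxM (R : realType) m p q (M : 'M[R]_(m, p)) (N : 'M[R]_(p, q)) :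
  cmx (M *m N) = cmx M *m cmx N.
Proof. exact: map_mxM. Qed.

Lemma cmx1 (R : realType) m : cmx (1%:M : 'M[R]_m) = 1%:M.
Proof. exact: map_mx1. Qed.

Lemma quad_le0 (R : realType) n (P : 'M[R]_n) :
  (forall (d : R[i]) (v : 'rV_n), v != 0 -> v *m cmx P = d *: v -> complex.Re d <= 0) ->
  P^T *m P = 1%:M -> forall x : 'rV[R]_n, (x *m P *m x^T) 0 0 <= 0.
Proof.
move=> Heig Horth x.
have Horth' : P *m P^T = 1%:M by apply: mulmx1C.
have Anorm : cmx P \is normalmx.
  apply/normalmxP; rewrite cmx_tr -!cmxM Horth Horth' //.
move/orthomx_spectralP: Anorm.
set U := spectralmx _; set d := spectral_diag _ => Aeq.
have Uu : U \is unitarymx by apply: spectral_unitarymx.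
have Uunit : U \in unitmx by apply: spectral_unit.
have dle0 : forall k, complex.Re (d 0 k) <= 0.
  move=> k; apply: (Heig _ (delta_mx 0 k *m U)).
    apply: contraNneq (oner_neq0 (R[i])) => H0.
    have := congr1 (mulmx^~ (invmx U)) H0; rewrite /= mul0mx mulmxK //.
    by move=> /matrixP/(_ 0 k); rewrite !mxE !eqxx /= => H1; apply/eqP; exact: H1.
  rewrite Aeq !mulmxA mulmxK // scalemxAl.
  congr (_ *m _); apply/matrixP=> i j; rewrite mul_mx_diag !mxE.
  rewrite ord1 eqxx /=; case: eqP => [->|_]; by rewrite ?mulr1 ?mulr0 ?mul1r ?mul0r.
have e1 : (x *m P *m x^T) 0 0 = complex.Re ((cmx x *m cmx P *m cmx x^T) 0 0).
  by rewrite -!cmxM [in RHS]mxE.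
rewrite e1 Aeq invmx_unitary // !mulmxA.
set y := cmx x *m U^t*.
rewrite -mulmxA mxE raddf_sum; apply: sumr_le0 => k _.
have hu : (U *m cmx x^T) k 0 = (y 0 k)^*%C.
  rewrite !mxE rmorph_sum; apply: eq_bigr => j _; rewrite !mxE rmorphM /= conjcK.
  by rewrite oppr0 mulrC.
rewrite hu mul_mx_diag mxE [y 0 k * _]mulrC.
rewrite [X in X <= 0](_ : _ = complex.Re (d 0 k * y 0 k * (y 0 k)^*%C)) //.
rewrite reterm3.
by rewrite mulr_le0_ge0 // addr_ge0 // sqr_ge0.
Qed.

Local Close Scope sesquilinear_scope.


Lemma qd (R : realType) n (P : 'M[R]_n) i j :
  ((delta_mx 0 i : 'rV[R]_n) *m P *m (delta_mx 0 j : 'rV[R]_n)^T) 0 0 = P i j.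
Proof.
by rewrite -rowE trmx_delta -colE !mxE.
Qed.

Lemma qd' (R : realType) n (P : 'M[R]_n) i j :
  \sum_k ((delta_mx 0 i : 'rV[R]_n) *m P) 0 k * (delta_mx 0 j : 'rV[R]_n)^T k 0 = P i j.
Proof. by rewrite -(qd P i j) [RHS]mxE. Qed.

Lemma q2 (R : realType) n (P : 'M[R]_n) i j (a : R) :
  let x := (delta_mx 0 i : 'rV[R]_n) + a *: delta_mx 0 j in
  (x *m P *m x^T) 0 0 = P i i + a * P i j + a * P j i + a ^+ 2 * P j j.
Proof.
rewrite /= linearD /= linearZ /= !mulmxDl !mulmxDr -!scalemxAl -!scalemxAr.
rewrite !mxE !qd' expr2; ring.
Qed.

Lemma offd (R : realType) n (P : 'M[R]_n) i j :
  signed_perm_mx P -> (forall x : 'rV[R]_n, (x *m P *m x^T) 0 0 <= 0) ->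
  i != j -> P i j != 0 -> P j i = - P i j.
Proof.
move=> hP Hq ij Hij.
have Pii : P i i = 0.
  apply/eqP; apply: contraR ij => H; apply/eqP; exact: (sp_row hP H Hij).
have Pjj : P j j = 0.
  apply/eqP; apply: contraR ij => H; apply/eqP; exact: (sp_col hP Hij H).
have := Hq (delta_mx 0 i + P i j *: delta_mx 0 j); rewrite q2 Pii Pjj.
move: (sp_entry i j hP) (sp_entry j i hP) Hij; rewrite !inE.
move=> /or3P[]/eqP-> /or3P[]/eqP->; rewrite ?eqxx /= => H; try discriminate H; lra.
Qed.

Lemma structP (R : realType) n (P : 'M[R]_n) :
  signed_perm_mx P -> (forall x : 'rV[R]_n, (x *m P *m x^T) 0 0 <= 0) ->
  exists (S E : 'M[R]_n),
       S^T = - S /\ is_diag_mx E /\ (forall k, E k k \in [:: 0; 1]) /\ P = S - E.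
Proof.
move=> hP Hq.
exists (\matrix_(i, j) (if i == j then 0 else P i j)),
       (\matrix_(i, j) (if i == j then - P i i else 0)).
split; [|split; [|split]].
- apply/matrixP=> i j; rewrite !mxE eq_sym; case: eqP => [_|/eqP ij]; first by rewrite oppr0.
  have [Hz|Hnz] := eqVneq (P i j) 0.
    rewrite Hz oppr0; have [//|H] := eqVneq (P j i) 0.
    have ji : j != i by rewrite eq_sym.
    by move: (offd hP Hq ji H); rewrite Hz => /eqP; rewrite eq_sym oppr_eq0 (negbTE H).
  exact: offd hP Hq ij Hnz.
- apply/is_diag_mxP=> i j ij; rewrite mxE; case: eqP => // E; by rewrite E eqxx in ij.
- move=> k; rewrite mxE eqxx.
  have := Hq (delta_mx 0 k); rewrite qd.
  by move: (sp_entry k k hP); rewrite !inE => /or3P[]/eqP->; rewrite ?opprK ?oppr0 ?eqxx ?orbT //; lra.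
- apply/matrixP=> i j; rewrite !mxE; case: eqP => [->|_]; first by rewrite sub0r opprK.
  by rewrite subr0.
Qed.



Lemma AhatE00 (R : realType) (n : nat) (alpha : 'rV[R]_n) (s0 : R) (P : 'M[R]_n) (k : 'I_n) : Ahat alpha s0 P ord0 (widen_ord (leqnSn n) k) = alpha 0 k.
Proof.
rewrite /Ahat castmxE.
have -> : cast_ord (esym (erefl (1 + n)%N, addnC n 1).1) ord0 = lshift n (0 : 'I_1) by apply: val_inj.
have -> : cast_ord (esym (erefl (1 + n)%N, addnC n 1).2) (widen_ord (leqnSn n) k) = lshift 1 k by apply: val_inj.
by rewrite block_mxEul.
Qed.

Lemma AhatE0n (R : realType) (n : nat) (alpha : 'rV[R]_n) (s0 : R) (P : 'M[R]_n) : Ahat alpha s0 P ord0 ord_max = s0.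
Proof.
rewrite /Ahat castmxE.
have -> : cast_ord (esym (erefl (1 + n)%N, addnC n 1).1) ord0 = lshift n (0 : 'I_1) by apply: val_inj.
have -> : cast_ord (esym (erefl (1 + n)%N, addnC n 1).2) ord_max = rshift n (0 : 'I_1).
  by apply: val_inj; rewrite /= addn0.
by rewrite block_mxEur mxE.
Qed.

Lemma AhatEk (R : realType) (n : nat) (alpha : 'rV[R]_n) (s0 : R) (P : 'M[R]_n) (k' k : 'I_n) : Ahat alpha s0 P (lift ord0 k') (widen_ord (leqnSn n) k) = P k' k.
Proof.
rewrite /Ahat castmxE.
have -> : cast_ord (esym (erefl (1 + n)%N, addnC n 1).1) (lift ord0 k') = rshift 1 k' by apply: val_inj.
have -> : cast_ord (esym (erefl (1 + n)%N, addnC n 1).2) (widen_ord (leqnSn n) k) = lshift 1 k by apply: val_inj.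
by rewrite block_mxEdl.
Qed.

Lemma AhatEkn (R : realType) (n : nat) (alpha : 'rV[R]_n) (s0 : R) (P : 'M[R]_n) (k' : 'I_n) : Ahat alpha s0 P (lift ord0 k') ord_max = 0.
Proof.
rewrite /Ahat castmxE.
have -> : cast_ord (esym (erefl (1 + n)%N, addnC n 1).1) (lift ord0 k') = rshift 1 k' by apply: val_inj.
have -> : cast_ord (esym (erefl (1 + n)%N, addnC n 1).2) ord_max = rshift n (0 : 'I_1).
  by apply: val_inj; rewrite /= addn0.
by rewrite block_mxEdr mxE.
Qed.


Definition ap (R : realType) (n : nat) (s0 : R) (k : nat) : R :=
  if (2 * k.+1 <= n.+1)%N then s0 * (-1) ^+ k else s0 * (-1) ^+ (n - k).

Lemma Pstar_E (R : realType) n (s0 : R) (k' k : 'I_n) :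
  Pstar n s0 k' k = if (k' + k == n.-1)%N then ap n s0 k else 0.
Proof.
rewrite /Pstar mxE /ap.
have -> : (k'.+1 + k.+1 == n.+1)%N = (k' + k == n.-1)%N.
  have := ltn_ord k; have := ltn_ord k'; move=> ? ?; apply/idP/idP => /eqP H; apply/eqP; lia.
by rewrite /= subSS.
Qed.

Lemma ap_prod (R : realType) n (s0 : R) k : s0 ^+ 2 = 1 -> (k <= n)%N ->
  ap n s0 k * ap n s0 (n - k) = 1.
Proof.
move=> hs kn; rewrite /ap subKn //.
have sq : forall m, (-1) ^+ m * (-1) ^+ m = 1 :> R.
  by move=> m; rewrite -exprD addnn -mul2n exprM expr2 mulrNN mulr1 expr1n.
case: ifP => h1; case: ifP => h2.
- exfalso; move: h1 h2; lia.
- by rewrite mulrACA sq -expr2 hs mulr1.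
- by rewrite mulrACA sq -expr2 hs mulr1.
- have -> : (n - k = k)%N by move: h1 h2; lia.
  by rewrite mulrACA sq -expr2 hs mulr1.
Qed.

Lemma col_k (R : realType) n (alpha : 'rV[R]_n) (s0 : R) (v : 'rV[R[i]]_(1 + n)) (z : R[i])
  (k : nat) (hk : (k < n)%N) :
  v *m cmx (Ahat alpha s0 (Pstar n s0)) = z *: v ->
  z * v 0 (inord k) = v 0 (inord 0) * (alpha 0 (Ordinal hk))%:C%C
                      + v 0 (inord (n - k)) * (ap n s0 k)%:C%C.
Proof.
move=> Hv.
have -> : (inord k : 'I_(1 + n)) = widen_ord (leqnSn n) (Ordinal hk).
  by apply: val_inj; rewrite /= inordK // ltnW.
have := congr1 (fun M : 'rV[R[i]]_(1 + n) => M 0 (widen_ord (leqnSn n) (Ordinal hk))) Hv.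
rewrite /= [RHS]mxE mxE big_ord_recl /= => <-.
rewrite mxE AhatE00.
have -> : (inord 0 : 'I_(1 + n)) = ord0 by apply: val_inj; rewrite /= inordK.
congr (_ + _).
have hk0 : (n.-1 - k < n)%N by lia.
rewrite (bigD1 (Ordinal hk0)) //= big1 ?addr0.
  rewrite mxE AhatEk Pstar_E /=.
  have -> : (n.-1 - k + k == n.-1)%N by apply/eqP; lia.
  congr (v 0 _ * _); apply: val_inj; rewrite /= inordK; rewrite /bump ?add1n; lia.
move=> k' Hk'; rewrite mxE AhatEk Pstar_E /=.
have -> : (k' + k == n.-1)%N = false.
  apply/negP => /eqP H; move: Hk' => /eqP; apply; apply: val_inj => /=; lia.
by rewrite mulr0.
Qed.

Lemma col_n (R : realType) n (alpha : 'rV[R]_n) (s0 : R) (P : 'M[R]_n) (v : 'rV[R[i]]_(1 + n)) (z : R[i]) :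
  v *m cmx (Ahat alpha s0 P) = z *: v ->
  z * v 0 (inord n) = v 0 (inord 0) * (s0%:C)%C.
Proof.
move=> Hv.
have -> : (inord n : 'I_(1 + n)) = ord_max by apply: val_inj; rewrite /= inordK.
have -> : (inord 0 : 'I_(1 + n)) = ord0 by apply: val_inj; rewrite /= inordK.
have := congr1 (fun M : 'rV[R[i]]_(1 + n) => M 0 ord_max) Hv.
rewrite /= [RHS]mxE mxE big_ord_recl /= => <-.
rewrite mxE AhatE0n big1 ?addr0 // => k' _.
by rewrite mxE AhatEkn mulr0.
Qed.

Lemma im_quad (R : realType) (z : R[i]) (a : R) :
  z ^+ 2 - (a%:C)%C * z - 1 = 0 -> complex.Im z = 0.
Proof.
rewrite expr2; case: z => x y /= /eqP; rewrite eq_complex /= => /andP[/eqP h1 /eqP h2].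
move: h1 h2.
rewrite ?mul0r ?mulr0 ?subr0 ?addr0 ?add0r ?sub0r ?oppr0.
move=> h1 h2.
have : y * (2 * x - a) = 0 by lra.
move/eqP; rewrite mulf_eq0 => /orP[/eqP //|/eqP h3].
have hx : a = 2 * x by lra.
rewrite hx in h1; nra.
Qed.

Lemma part2 (R : realType) n (hn : (1 <= n)%N) (s0 : R) (hs0 : (s0 == 1) || (s0 == -1))
  (alpha : 'rV[R]_n) (z : R[i]) :
  eigenvalue (cmx (Ahat alpha s0 (Pstar n s0))) z -> complex.Im z = 0.
Proof.
move/eigenvalueP => [v Hv vn0].
have hs : s0 ^+ 2 = 1 by case/orP: hs0 => /eqP->; rewrite ?sqrrN expr1n.
have hsC : (s0%:C)%C ^+ 2 = 1 by rewrite expr2 -rmorphM -expr2 hs rmorph1.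
have s0nz : (s0%:C)%C != 0 :> R[i].
  by apply/eqP => H; move: hsC; rewrite H expr2 mulr0 => /eqP; rewrite eq_sym oner_eq0.
pose f t := v 0 (inord t).
have E0 := col_k hn Hv; rewrite subn0 in E0.
have ap0 : ap n s0 0 = s0 by rewrite /ap ifT ?mulr1 // ltnS muln1.
rewrite ap0 in E0.
have En := col_n Hv.
have [f0z|f0nz] := eqVneq (v 0 (inord 0)) 0; last first.
  have H : (z ^+ 2 - (alpha 0 (Ordinal hn))%:C%C * z - 1) * v 0 (inord 0) =
    z * (z * v 0 (inord 0) - (v 0 (inord 0) * (alpha 0 (Ordinal hn))%:C%C + v 0 (inord n) * (s0%:C)%C))
    + (s0%:C)%C * (z * v 0 (inord n) - v 0 (inord 0) * (s0%:C)%C)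
    + ((s0%:C)%C ^+ 2 - 1) * v 0 (inord 0) by ring.
  move: H; rewrite E0 En hsC !subrr !mulr0 mul0r !addr0 => /eqP.
  by rewrite mulf_eq0 (negbTE f0nz) orbF => /eqP /im_quad.
have fnz : v 0 (inord n) = 0.
  move: E0; rewrite f0z !mul0r mulr0 add0r => /esym/eqP.
  by rewrite mulf_eq0 (negbTE s0nz) orbF => /eqP.
have [t Ht] : exists t, v 0 t != 0.
  apply/existsP; apply: contraR vn0; rewrite negb_exists => /forallP H.
  apply/eqP/rowP => k; rewrite mxE; exact/eqP/negPn/H.
have tv : v 0 t = v 0 (inord t) by rewrite inord_val.
have t0 : (0 < t)%N.
  rewrite lt0n; apply/eqP => H; move: Ht; rewrite tv H f0z eqxx //.
have tn : (t < n)%N.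
  have := ltn_ord t; rewrite leq_eqVlt ltnS => /orP[/eqP H|//].
  by move: Ht; rewrite tv; case: H => ->; rewrite fnz eqxx.
have hnt : (n - t < n)%N by lia.
have Ek := col_k tn Hv.
have Enk := col_k hnt Hv.
rewrite subKn ?(ltnW tn) // f0z !mul0r !add0r in Enk.
rewrite f0z !mul0r !add0r in Ek.
have H : (z ^+ 2 - ((0 : R)%:C)%C * z - 1) * v 0 (inord t) =
    z * (z * v 0 (inord t) - v 0 (inord (n - t)) * (ap n s0 t)%:C%C)
    + (ap n s0 t)%:C%C * (z * v 0 (inord (n - t)) - v 0 (inord t) * (ap n s0 (n - t))%:C%C)
    + ((ap n s0 t)%:C%C * (ap n s0 (n - t))%:C%C - 1) * v 0 (inord t) by ring.
move: H; rewrite Ek Enk -rmorphM ap_prod ?(ltnW tn) // rmorph1 !subrr !mulr0 mul0r !addr0 => /eqP.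
rewrite mul0r add0r mulf_eq0 -tv (negbTE Ht) orbF subr0 => /eqP H.
apply: (@im_quad _ _ 0); by rewrite mul0r !subr0.
Qed.

(* m = n + 1 with m >= 2, i.e. n >= 1. *)
Theorem theorem2 (R : realType) (n : nat) (hn : (1 <= n)%N)
  (s0 : R) (hs0 : (s0 == 1) || (s0 == -1))
  (tau : R) (htau : 0 < tau)
  (alpha0 : R) (halpha0 : 0 <= alpha0) (alpha : 'rV[R]_n)
  (P : 'M[R]_n) (hP : signed_perm_mx P) :
  ((forall w : R[i],
       \det (- ('i%C * w) *: cmx (Dmx n tau) - cmx (Bhat alpha0 P)) = 0 ->
       complex.Im w <= 0)
    <->
   (exists (S E : 'M[R]_n),
       S^T = - S /\ is_diag_mx E /\ (forall k, E k k \in [:: 0; 1]) /\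
       P = S - E))
  /\
  (P = Pstar n s0 ->
     forall z : R[i], eigenvalue (cmx (Ahat alpha s0 P)) z -> complex.Im z = 0).
Proof.
split; first split.
- move=> H; apply: (structP hP); apply: (quad_le0 _ (sp_orth hP)).
  exact: (hyp_eig htau H).
- move=> [S [E [HS [HE [HE01 HPe]]]]] w.
  exact: (dir1 htau halpha0 HS HE HE01 HPe).
- move=> -> z; exact: (part2 hn hs0).
Qed.
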